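(* Let $G$ be a finite group, $\omega$ a normalized 3-cocycle, $X,Y$ finite $G$-sets, and $(F,s^F),(H,s^H):\mathcal M(X,\Psi_X)\to\mathcal M(Y,\Psi_Y)$ $\mathrm{Vec}_G^\omega$-module functors with associated data $m^F,A^F$ and $m^H,A^H$. Then morphisms of module functors $\eta:(F,s^F)\Rightarrow(H,s^H)$ are in bijection (via $\eta\mapsto(M^\eta_{x,y})$ with $M^\eta_{x,y}=p_{Hxy}\circ\eta_x\circ j_{Fxy}$) with families of matrices $M_{x,y}\in\mathrm{Mat}(m^H_{xy}\times m^F_{xy},\mathbb F)$ ($x\in X,y\in Y$) satisfying $M_{x,y}A^F_{g,x,y}=A^H_{g,x,y}M_{g\cdot x,g\cdot y}$ for all $g\in G,x\in X,y\in Y$. Moreover, $\eta$ is an isomorphism if and only if every $M^\eta_{x,y}$ is square and invertible.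
   Context: $\mathbb F$ is algebraically closed. $\mathrm{Vec}_G^\omega$: finite-dimensional $G$-graded vector spaces, simple objects $\delta^g$, $\delta^g\otimes\delta^h=\delta^{gh}$, associator $\omega(g,h,k)\mathrm{id}$. For a $G$-set $X$ and normalized $\Psi:G\times G\times X\to\mathbb F^\times$ with $\Psi(h,k,g^{-1}\cdot x)\Psi^{-1}(gh,k,x)\Psi(g,hk,x)\Psi^{-1}(g,h,x)=\omega^{-1}(g,h,k)$, $\mathcal M(X,\Psi)$ is the category of finite-dimensional $X$-graded vector spaces (simple objects $x\in X$), $\delta^g\triangleright x=g\cdot x$, module constraint $m_{\delta^g,\delta^h,x}=\Psi(g,h,(gh)\cdot x)\mathrm{id}$. A module functor is an $\mathbb F$-linear functor $F$ with natural isomorphism $s_{C,M}:F(C\triangleright M)\to C\triangleright F(M)$ satisfying the module pentagon axiom; a morphism of module functors is a natural transformation $\eta$ with $s^H_{C,M}\circ\eta_{C\triangleright M}=(\mathrm{id}_C\triangleright\eta_M)\circ s^F_{C,M}$. For a module functor $F$: $m^F_{xy}=\dim\mathrm{Hom}(F(x),y)$; inclusions $j^\alpha_{Fxy}:y\to F(x)$ and projections $p^\alpha_{Fxy}:F(x)\to y$ with $p^\alpha\circ j^\beta=\delta\delta\,\mathrm{id}$, $\sum j\circ p=\mathrm{id}$ are chosen, $j_{Fxy}=(j^1_{Fxy},\dots)$: $y^{\oplus m^F_{xy}}\to F(x)$, $p_{Fxy}=(p^1_{Fxy},\dots)^T$; $A^F_{g,x,y}$ is the matrix with $(\alpha,\beta)$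 entry $(\mathrm{id}_{\delta^g}\triangleright p^\alpha_{Fxy})\circ s_{\delta^g,x}\circ j^\beta_{F,g\cdot x,g\cdot y}\in\mathbb F$. Morphisms $y^{\oplus a}\to y^{\oplus b}$ are identified with $b\times a$ matrices. *)

(* Defs.v *)
From HB Require Import structures.
From mathcomp Require Import all_boot all_order all_fingroup all_algebra.
Set Implicit Arguments. Unset Strict Implicit. Unset Printing Implicit Defensive.
Import GRing.Theory.
Local Open Scope ring_scope.

Record gset (G : finGroupType) := GSet {
  gcar :> finType;
  gsact : G -> gcar -> gcar;
  gact1 : forall x, gsact 1%g x = x;
  gactM : forall g h x, gsact (g * h)%g x = gsact g (gsact h x) }.
Arguments gsact {G} _ _ _.

Definition normalized_3cocycle (K : fieldType) (G : finGroupType)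
    (omega : G -> G -> G -> K) : Prop :=
  (forall g h k, omega g h k != 0) /\
  (forall h k, omega 1%g h k = 1) /\ (forall g k, omega g 1%g k = 1) /\
  (forall g h, omega g h 1%g = 1) /\
  (forall g h k l, omega h k l * omega g (h * k)%g l * omega g h k
                   = omega (g * h)%g k l * omega g h (k * l)%g).

Definition module_Psi (K : fieldType) (G : finGroupType)
    (omega : G -> G -> G -> K) (X : gset G) (Psi : G -> G -> X -> K) : Prop :=
  (forall g h x, Psi g h x != 0) /\
  (forall h x, Psi 1%g h x = 1) /\ (forall g x, Psi g 1%g x = 1) /\
  (forall g h k x, Psi h k (gsact X g^-1%g x) * (Psi (g * h)%g k x)^-1
                   * Psi g (h * k)%g x * (Psi g h x)^-1 = (omega g h k)^-1).

Section Cat.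
Variable K : fieldType.
Variable G : finGroupType.
Variable X : gset G.

(* The category M(X,Psi): objects are X-graded f.d. spaces, modelled by
   their graded dimensions V : X -> nat (component at z is K^(V z));
   a morphism V -> W is a family of matrices 'M_(W z, V z)
   (column-vector convention, as in the paper). *)
Definition obj := X -> nat.
Definition mhom (V W : obj) := forall z : X, 'M[K]_(W z, V z).
Definition idh (V : obj) : mhom V V := fun z => 1%:M.
Definition hcomp (U V W : obj) (f : mhom V W) (g : mhom U V) : mhom U W :=
  fun z => f z *m g z.
Definition heq (V W : obj) (f g : mhom V W) : Prop := forall z, f z = g z.
Definition hadd (V W : obj) (f g : mhom V W) : mhom V W := fun z => f z + g z.
Definition hscale (V W : obj) (c : K) (f : mhom V W) : mhom V W :=
  fun z => c *: f z.

Definition simple (x : X) : obj := fun z => nat_of_bool (z == x).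
(* End(x) = K : the scalar of an endomorphism of a simple object *)
Definition scal (x : X) (f : mhom (simple x) (simple x)) : K := \tr (f x).

Definition actobj (g : G) (V : obj) : obj := fun z => V (gsact X g^-1%g z).
Definition acthom (g : G) (V W : obj) (f : mhom V W) :
  mhom (actobj g V) (actobj g W) := fun z => f (gsact X g^-1%g z).

Definition eqhom (V W : obj) (E : forall z, V z = W z) : mhom V W :=
  fun z => castmx (erefl (W z), esym (E z)) (1%:M : 'M[K]_(W z)).

Lemma actobjM (g h : G) (V : obj) z :
  actobj (g * h)%g V z = actobj g (actobj h V) z.
Proof. by rewrite /actobj invMg gactM. Qed.

Definition mcon (Psi : G -> G -> X -> K) (g h : G) (V : obj) :
  mhom (actobj (g * h)%g V) (actobj g (actobj h V)) :=
  fun z => Psi g h z *: eqhom (actobjM g h V) z.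

Lemma actsimple (g : G) (x : X) z :
  actobj g (simple x) z = simple (gsact X g x) z.
Proof.
rewrite /actobj /simple; congr nat_of_bool.
apply/eqP/eqP => [<-|->].
  by rewrite -gactM mulgV gact1.
by rewrite -gactM mulVg gact1.
Qed.

Definition iso_act (g : G) (x : X) : mhom (simple (gsact X g x)) (actobj g (simple x)) :=
  eqhom (fun z => esym (actsimple g x z)).
Definition iso_act_inv (g : G) (x : X) : mhom (actobj g (simple x)) (simple (gsact X g x)) :=
  eqhom (actsimple g x).
End Cat.

Arguments idh {K G X} V.
Arguments hcomp {K G X U V W} f g.
Arguments heq {K G X V W} f g.
Arguments hadd {K G X V W} f g.
Arguments hscale {K G X V W} c f.
Arguments simple {G X} x.
Arguments scal {K G X x} f.
Arguments actobj {G X} g V.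
Arguments acthom {K G X} g {V W} f.
Arguments mcon {K G X} Psi g h V.
Arguments iso_act K {G X} g x.
Arguments iso_act_inv K {G X} g x.

Record lin_functor (K : fieldType) (G : finGroupType) (X Y : gset G) := LinFunctor {
  Fo : obj X -> obj Y;
  Fm : forall V W : obj X, mhom K V W -> mhom K (Fo V) (Fo W);
  Fm_id : forall V, heq (Fm (idh V)) (idh (Fo V));
  Fm_comp : forall U V W (f : mhom K V W) (g : mhom K U V),
      heq (Fm (hcomp f g)) (hcomp (Fm f) (Fm g));
  Fm_add : forall V W (f g : mhom K V W), heq (Fm (hadd f g)) (hadd (Fm f) (Fm g));
  Fm_scale : forall V W (c : K) (f : mhom K V W),
      heq (Fm (hscale c f)) (hscale c (Fm f)) }.
Arguments Fo {K G X Y} l V.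
Arguments Fm {K G X Y} l {V W} f.

(* Vec_G^omega-module functors (structure s given on the simple objects
   delta^g of Vec_G^omega, which determines it) *)
Record modfun (K : fieldType) (G : finGroupType) (X Y : gset G)
    (PsiX : G -> G -> X -> K) (PsiY : G -> G -> Y -> K) := ModFun {
  mfun :> lin_functor K X Y;
  ms : forall (g : G) (V : obj X),
      mhom K (Fo mfun (actobj g V)) (actobj g (Fo mfun V));
  ms_nat : forall g V W (f : mhom K V W),
      heq (hcomp (ms g W) (Fm mfun (acthom g f)))
          (hcomp (acthom g (Fm mfun f)) (ms g V));
  ms_iso : forall g V, exists t : mhom K (actobj g (Fo mfun V)) (Fo mfun (actobj g V)),
      heq (hcomp t (ms g V)) (idh _) /\ heq (hcomp (ms g V) t) (idh _);
  ms_pent : forall g h V,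
      heq (hcomp (acthom g (ms h V)) (hcomp (ms g (actobj h V)) (Fm mfun (mcon PsiX g h V))))
          (hcomp (mcon PsiY g h (Fo mfun V)) (ms (g * h)%g V)) }.
Arguments ms {K G X Y PsiX PsiY} m g V.

Section ModFun.
Variables (K : fieldType) (G : finGroupType) (X Y : gset G).
Variables (PsiX : G -> G -> X -> K) (PsiY : G -> G -> Y -> K).
Implicit Types F H : modfun PsiX PsiY.

Definition modnat F H (eta : forall V : obj X, mhom K (Fo F V) (Fo H V)) : Prop :=
  (forall V W (f : mhom K V W), heq (hcomp (eta W) (Fm F f)) (hcomp (Fm H f) (eta V))) /\
  (forall g V, heq (hcomp (ms H g V) (eta (actobj g V))) (hcomp (acthom g (eta V)) (ms F g V))).

Definition modiso F H (eta : forall V : obj X, mhom K (Fo F V) (Fo H V)) : Prop :=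
  exists theta : forall V : obj X, mhom K (Fo H V) (Fo F V),
    modnat theta /\
    forall V, heq (hcomp (theta V) (eta V)) (idh _) /\ heq (hcomp (eta V) (theta V)) (idh _).

(* m^F_{xy} = dim Hom(F(x), y) *)
Definition mlt F (x : X) (y : Y) : nat := Fo F (simple x) y.

Definition inclT F := forall x y, 'I_(mlt F x y) -> mhom K (simple y) (Fo F (simple x)).
Definition projT F := forall x y, 'I_(mlt F x y) -> mhom K (Fo F (simple x)) (simple y).

Definition incl_proj F (j : inclT F) (p : projT F) : Prop :=
  (forall x y (a b : 'I_(mlt F x y)),
      heq (hcomp (p x y a) (j x y b)) (hscale (a == b)%:R (idh (simple y)))) /\
  (forall x (z : Y), \sum_(y : Y) \sum_(a < mlt F x y) (hcomp (j x y a) (p x y a)) z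
                    = 1%:M).

Definition Amat F (j : inclT F) (p : projT F) (g : G) (x : X) (y : Y) :
    'M[K]_(mlt F x y, mlt F (gsact X g x) (gsact Y g y)) :=
  \matrix_(a, b)
    scal (hcomp (iso_act_inv K g y)
         (hcomp (acthom g (p x y a))
         (hcomp (ms F g (simple x))
         (hcomp (Fm F (iso_act K g x)) (j (gsact X g x) (gsact Y g y) b))))).

Definition Mmat F H (jF : inclT F) (pH : projT H)
    (eta : forall V : obj X, mhom K (Fo F V) (Fo H V)) (x : X) (y : Y) :
    'M[K]_(mlt H x y, mlt F x y) :=
  \matrix_(a, b) scal (hcomp (pH x y a) (hcomp (eta (simple x)) (jF x y b))).
End ModFun.

(* Main.v *)
Require Import Defs.
From HB Require Import structures.
From mathcomp Require Import all_boot all_order all_fingroup all_algebra.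
From Stdlib Require Import FunctionalExtensionality.
Import GRing.Theory.
Local Open Scope ring_scope.

Set Implicit Arguments. Unset Strict Implicit. Unset Printing Implicit Defensive.

Section Basic.
Variables (K : fieldType) (G : finGroupType) (T : gset G).
Implicit Types V W U : obj T.

Definition hzero V W : mhom K V W := fun z => 0.
Definition hsum V W (I : finType) (f : I -> mhom K V W) : mhom K V W :=
  fun z => \sum_(i : I) f i z.

Lemma heqE V W (f g : mhom K V W) : heq f g -> f = g.
Proof. by move=> h; apply: functional_extensionality_dep. Qed.

Lemma hcompA U V W Z (f : mhom K W Z) (g : mhom K V W) (h : mhom K U V) :
  hcomp f (hcomp g h) = hcomp (hcomp f g) h.
Proof. by apply: heqE => z; rewrite /hcomp mulmxA. Qed.

Lemma hcomp1h V W (f : mhom K V W) : hcomp (idh W) f = f.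
Proof. by apply: heqE => z; rewrite /hcomp /idh mul1mx. Qed.

Lemma hcomph1 V W (f : mhom K V W) : hcomp f (idh V) = f.
Proof. by apply: heqE => z; rewrite /hcomp /idh mulmx1. Qed.

Lemma hcomp0h U V W (f : mhom K U V) : hcomp (hzero V W) f = hzero _ _.
Proof. by apply: heqE => z; rewrite /hcomp /hzero mul0mx. Qed.

Lemma hcomph0 U V W (f : mhom K V W) : hcomp f (hzero U V) = hzero _ _.
Proof. by apply: heqE => z; rewrite /hcomp /hzero mulmx0. Qed.

Lemma hcomp_suml U V W (I : finType) (f : I -> mhom K V W) (h : mhom K U V) :
  hcomp (hsum f) h = hsum (fun i => hcomp (f i) h).
Proof. by apply: heqE => z; rewrite /hcomp /hsum mulmx_suml. Qed.

Lemma hcomp_sumr U V W (I : finType) (f : I -> mhom K U V) (h : mhom K V W) :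
  hcomp h (hsum f) = hsum (fun i => hcomp h (f i)).
Proof. by apply: heqE => z; rewrite /hcomp /hsum mulmx_sumr. Qed.

Lemma hcomp_scalel U V W c (f : mhom K V W) (h : mhom K U V) :
  hcomp (hscale c f) h = hscale c (hcomp f h).
Proof. by apply: heqE => z; rewrite /hcomp /hscale scalemxAl. Qed.

Lemma hcomp_scaler U V W c (f : mhom K V W) (h : mhom K U V) :
  hcomp f (hscale c h) = hscale c (hcomp f h).
Proof. by apply: heqE => z; rewrite /hcomp /hscale scalemxAr. Qed.

Lemma hscale0 V W (f : mhom K V W) : hscale 0 f = hzero _ _.
Proof. by apply: heqE => z; rewrite /hscale scale0r. Qed.

Lemma hsum_ext V W (I : finType) (f g : I -> mhom K V W) :
  (forall i, f i = g i) -> hsum f = hsum g.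
Proof. by move=> e; apply: heqE => z; rewrite /hsum; apply: eq_bigr => i _; rewrite e. Qed.

Lemma hsum_zero V W (I : finType) : hsum (fun i : I => hzero V W) = hzero V W.
Proof. by apply: heqE => z; rewrite /hsum /hzero big1. Qed.

Lemma hsum1 V W (I : finType) (i0 : I) (f : I -> mhom K V W) :
  (forall i, i != i0 -> f i = hzero _ _) -> hsum f = f i0.
Proof.
move=> e; apply: heqE => z; rewrite /hsum (bigD1 i0) //= big1 ?addr0 // => i ni.
by rewrite e.
Qed.

Lemma hsum_scale V W (I : finType) c (f : I -> mhom K V W) :
  hsum (fun i => hscale c (f i)) = hscale c (hsum f).
Proof. by apply: heqE => z; rewrite /hsum /hscale scaler_sumr. Qed.

Lemma hsum_swap V W (I J : finType) (f : I -> J -> mhom K V W) :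
  hsum (fun i => hsum (fun j => f i j)) = hsum (fun j => hsum (fun i => f i j)).
Proof. by apply: heqE => z; rewrite /hsum exchange_big. Qed.

Lemma boolmx0 (b1 b2 : bool) (A : 'M[K]_(nat_of_bool b1, nat_of_bool b2)) :
  ~~ (b1 && b2) -> A = 0.
Proof.
case: b1 b2 A => [] [] A //= _; apply/matrixP => i j; first by case: j.
  by case: i. by case: i.
Qed.

Lemma simple_neq (x x' : T) (f : mhom K (simple x) (simple x')) :
  x != x' -> f = hzero _ _.
Proof.
move=> ne; apply: heqE => z; rewrite /hzero; apply: boolmx0.
apply/negP => /andP [/eqP e1 /eqP e2]; by rewrite -e1 -e2 eqxx in ne.
Qed.

Definition scal_ (x : T) (f : mhom K (simple x) (simple x)) := scal f.

Lemma mx1b (b : bool) (A : 'M[K]_(nat_of_bool b)) : b -> A = \tr A *: 1%:M.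
Proof.
case: b A => //= A _. by rewrite {1}[A]mx11_scalar trace_mx11 scalemx1.
Qed.

Lemma simple_scal (x : T) (f : mhom K (simple x) (simple x)) :
  f = hscale (scal f) (idh _).
Proof.
apply: heqE => z; rewrite /hscale /idh /scal.
have [->|ne] := eqVneq z x.
  by apply: mx1b; rewrite eqxx.
rewrite (boolmx0 (f z)) ?(boolmx0 (1%:M)) ?scaler0 //; by rewrite (negbTE ne).
Qed.

Lemma scal_id (x : T) : scal (idh (simple x)) = 1 :> K.
Proof. by rewrite /scal /idh mxtrace1 /simple eqxx. Qed.

Lemma scal_scale (x : T) c (f : mhom K (simple x) (simple x)) :
  scal (hscale c f) = c * scal f.
Proof. by rewrite /scal /hscale mxtraceZ. Qed.

Lemma scal_zero (x : T) : scal (hzero (simple x) (simple x)) = 0 :> K.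
Proof. by rewrite /scal /hzero mxtrace0. Qed.

Lemma scal_sum (x : T) (I : finType) (f : I -> mhom K (simple x) (simple x)) :
  scal (hsum f) = \sum_i scal (f i).
Proof. by rewrite /scal /hsum raddf_sum. Qed.

Lemma scal_comp (x : T) (f g : mhom K (simple x) (simple x)) :
  scal (hcomp f g) = scal f * scal g.
Proof.
by rewrite {1}(simple_scal f) hcomp_scalel hcomp1h scal_scale.
Qed.

Lemma castmx11 (n m : nat) (e1 : n = m) (e2 : m = n) :
  castmx (erefl n, esym e2) (1%:M : 'M[K]_n) *m castmx (erefl m, esym e1) (1%:M : 'M[K]_m)
  = 1%:M.
Proof.
case: m / e1 e2 => e2; rewrite (eq_irrelevance e2 erefl) !castmx_id mulmx1 //.
Qed.

Lemma eqhomK V W (E1 : forall z, V z = W z) (E2 : forall z, W z = V z) :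
  hcomp (eqhom K E2) (eqhom K E1) = idh V.
Proof. by apply: heqE => z; rewrite /hcomp /eqhom castmx11. Qed.

Lemma iso_actK (g : G) (x : T) : hcomp (iso_act K g x) (iso_act_inv K g x) = idh _.
Proof. exact: eqhomK. Qed.
Lemma iso_actVK (g : G) (x : T) : hcomp (iso_act_inv K g x) (iso_act K g x) = idh _.
Proof. exact: eqhomK. Qed.

Lemma ordb_false (b : bool) (l : 'I_(nat_of_bool b)) : ~~ b -> False.
Proof. by case: b l => // [[]]. Qed.

Definition injs V (x : T) (k : 'I_(V x)) : mhom K (simple x) V :=
  fun z => \matrix_(i, l) ((i : nat) == k)%:R.
Definition prjs V (x : T) (k : 'I_(V x)) : mhom K V (simple x) :=
  fun z => \matrix_(l, i) ((i : nat) == k)%:R.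

Lemma decomp V :
  hsum (fun x => hsum (fun k : 'I_(V x) => hcomp (injs k) (prjs k))) = idh V.
Proof.
apply: heqE => z; apply/matrixP => i j; rewrite /hsum /hcomp /idh.
rewrite summxE (bigD1 z) //= [X in _ + X]big1 ?addr0 => [|x nx]; last first.
  rewrite summxE big1 // => k _; rewrite !mxE big1 // => l _.
  by case: (ordb_false l); rewrite eq_sym.
rewrite summxE (bigD1 i) //= [X in _ + X]big1 ?addr0 => [|k nk]; last first.
  rewrite !mxE big1 // => l _; rewrite !mxE.
  by move: nk; rewrite eq_sym -val_eqE /= => /negbTE ->; rewrite mul0r.
rewrite !mxE.
under eq_bigr => l _ do rewrite !mxE eqxx mul1r.
by rewrite sumr_const card_ord /simple eqxx eq_sym.
Qed.

End Basic.
Arguments hzero {K G T V W}.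
Arguments hsum {K G T V W I} f.
Arguments injs {K G T V x} k.
Arguments prjs {K G T V x} k.
Lemma hscale_zero (K : fieldType) (G : finGroupType) (T : gset G) (V W : obj T) c :
  hscale c (@hzero K G T V W) = hzero.
Proof. by apply: heqE => z; rewrite /hscale /hzero scaler0. Qed.
Lemma hsum0 (K : fieldType) (G : finGroupType) (T : gset G) (V W : obj T) (I : finType)
  (f : I -> mhom K V W) : (forall i, f i = hzero) -> hsum f = hzero.
Proof. by move=> e; rewrite (hsum_ext e) hsum_zero. Qed.


Section Functor.
Variables (K : fieldType) (G : finGroupType) (X Y : gset G).
Variable (F : lin_functor K X Y).

Lemma FmI V : Fm F (idh V) = idh _.
Proof. exact/heqE/Fm_id. Qed.
Lemma FmC U V W (f : mhom K V W) (g : mhom K U V) :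
  Fm F (hcomp f g) = hcomp (Fm F f) (Fm F g).
Proof. exact/heqE/Fm_comp. Qed.
Lemma FmS V W c (f : mhom K V W) : Fm F (hscale c f) = hscale c (Fm F f).
Proof. exact/heqE/Fm_scale. Qed.
Lemma FmD V W (f g : mhom K V W) : Fm F (hadd f g) = hadd (Fm F f) (Fm F g).
Proof. exact/heqE/Fm_add. Qed.
Lemma Fm0 V W : Fm F (@hzero K _ _ V W) = hzero.
Proof. by rewrite -(hscale0 (@hzero K _ _ V W)) FmS hscale0. Qed.

Lemma Fm_hsum V W (I : finType) (f : I -> mhom K V W) :
  Fm F (hsum f) = hsum (fun i => Fm F (f i)).
Proof.
rewrite /hsum; elim: (index_enum I) => [|a r IH].
  have -> : (fun z => \sum_(i <- [::]) f i z) = @hzero K _ _ V W.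
    by apply: heqE => z; rewrite big_nil.
  by rewrite Fm0; apply: heqE => z; rewrite big_nil.
have -> : (fun z => \sum_(i <- a :: r) f i z) = hadd (f a) (fun z => \sum_(i <- r) f i z).
  by apply: heqE => z; rewrite big_cons.
rewrite FmD IH; apply: heqE => z; by rewrite /hadd big_cons.
Qed.
End Functor.

Section Nat.
Variables (K : fieldType) (G : finGroupType) (X Y : gset G).
Variables (PsiX : G -> G -> X -> K) (PsiY : G -> G -> Y -> K).
Variables (F1 F2 : lin_functor K X Y).

Definition fam := forall x : X, mhom K (Fo F1 (simple x)) (Fo F2 (simple x)).

Lemma cross (e : fam) (x x' : X) (phi : mhom K (simple x) (simple x')) :
  hcomp (Fm F2 phi) (e x) = hcomp (e x') (Fm F1 phi).
Proof.
case: (eqVneq x x') phi => [<-|ne] phi.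
  rewrite (simple_scal phi) !FmS !FmI hcomp_scalel hcomp_scaler hcomp1h hcomph1 //.
by rewrite (simple_neq phi ne) !Fm0 hcomp0h hcomph0.
Qed.

Definition ext (e : fam) (V : obj X) : mhom K (Fo F1 V) (Fo F2 V) :=
  hsum (fun x => hsum (fun k : 'I_(V x) =>
     hcomp (Fm F2 (injs k)) (hcomp (e x) (Fm F1 (prjs k))))).

Lemma expand_F2 V W (f : mhom K V W) :
  Fm F2 f = hsum (fun x => hsum (fun k : 'I_(W x) =>
              hcomp (Fm F2 (injs k)) (Fm F2 (hcomp (prjs k) f)))).
Proof.
rewrite -{1}(hcomp1h f) -(decomp K W) hcomp_suml Fm_hsum; apply: hsum_ext => x.
rewrite hcomp_suml Fm_hsum; apply: hsum_ext => k.
by rewrite -hcompA FmC.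
Qed.

Lemma ext_simple_comp (e : fam) V (x : X) (phi : mhom K (simple x) V) :
  hcomp (ext e V) (Fm F1 phi) = hcomp (Fm F2 phi) (e x).
Proof.
rewrite expand_F2 /ext !hcomp_suml; apply: hsum_ext => x'.
rewrite !hcomp_suml; apply: hsum_ext => k.
by rewrite -!hcompA -FmC cross.
Qed.

Lemma ext_nat (e : fam) V W (f : mhom K V W) :
  hcomp (ext e W) (Fm F1 f) = hcomp (Fm F2 f) (ext e V).
Proof.
rewrite -{1}(hcomph1 f) -(decomp K V) hcomp_sumr Fm_hsum hcomp_sumr.
rewrite [ext e V]/ext hcomp_sumr; apply: hsum_ext => x.
rewrite hcomp_sumr Fm_hsum hcomp_sumr hcomp_sumr; apply: hsum_ext => k.
rewrite [hcomp f _]hcompA FmC hcompA ext_simple_comp.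
by rewrite FmC !hcompA.
Qed.

Lemma ext_simple (e : fam) (x : X) : ext e (simple x) = e x.
Proof.
have := ext_simple_comp e (idh (simple x)).
by rewrite !FmI hcomph1 hcomp1h.
Qed.

Definition natural (eta : forall V : obj X, mhom K (Fo F1 V) (Fo F2 V)) :=
  forall V W (f : mhom K V W), heq (hcomp (eta W) (Fm F1 f)) (hcomp (Fm F2 f) (eta V)).

Lemma natural_ext (eta : forall V : obj X, mhom K (Fo F1 V) (Fo F2 V)) :
  natural eta -> forall V, eta V = ext (fun x => eta (simple x)) V.
Proof.
move=> nat V.
rewrite -(hcomph1 (eta V)) -(FmI F1) -(decomp K V) Fm_hsum hcomp_sumr /ext.
apply: hsum_ext => x; rewrite Fm_hsum hcomp_sumr; apply: hsum_ext => k.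
by rewrite FmC hcompA (heqE (nat _ _ _)) -hcompA.
Qed.

End Nat.


Lemma gact_inj (G : finGroupType) (T : gset G) (g : G) (y y' : T) :
  gsact T g y = gsact T g y' -> y = y'.
Proof.
move=> e; have h z : gsact T g^-1 (gsact T g z) = z.
  by rewrite -Defs.gactM mulVg Defs.gact1.
by rewrite -(h y) e h.
Qed.

Lemma acthomC (K : fieldType) (G : finGroupType) (T : gset G) (g : G) (U V W : obj T)
  (f : mhom K V W) (h : mhom K U V) :
  acthom g (hcomp f h) = hcomp (acthom g f) (acthom g h).
Proof. by []. Qed.
Lemma acthomI (K : fieldType) (G : finGroupType) (T : gset G) (g : G) (V : obj T) :
  acthom g (idh V) = idh (actobj g V) :> mhom K _ _.
Proof. by []. Qed.
Lemma acthom_hsum (K : fieldType) (G : finGroupType) (T : gset G) (g : G) (V W : obj T)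
  (I : finType) (f : I -> mhom K V W) :
  acthom g (hsum f) = hsum (fun i => acthom g (f i)).
Proof. by []. Qed.
Lemma acthomS (K : fieldType) (G : finGroupType) (T : gset G) (g : G) (V W : obj T)
  c (f : mhom K V W) : acthom g (hscale c f) = hscale c (acthom g f).
Proof. by []. Qed.
Lemma acthom0 (K : fieldType) (G : finGroupType) (T : gset G) (g : G) (V W : obj T) :
  acthom g (@hzero K G T V W) = hzero.
Proof. by []. Qed.

Section One.
Variables (K : fieldType) (G : finGroupType) (X Y : gset G).
Variables (PsiX : G -> G -> X -> K) (PsiY : G -> G -> Y -> K).
Variables (F : modfun PsiX PsiY).
Unset Implicit Arguments.
Variables (j : inclT F) (p : projT F).
Set Implicit Arguments.
Hypothesis hjp : incl_proj j p.

Lemma compl (x : X) :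
  hsum (fun y => hsum (fun a : 'I_(mlt F x y) => hcomp (j x y a) (p x y a))) = idh _.
Proof. by apply: heqE => z; case: hjp => _ h; exact: h. Qed.

Lemma orth (x : X) (y : Y) (a b : 'I_(mlt F x y)) :
  hcomp (p x y a) (j x y b) = hscale (a == b)%:R (idh _).
Proof. by apply: heqE; case: hjp => h _; exact: h. Qed.

Lemma scal_mid (x : X) (y : Y) (u : mhom K (Fo F (simple x)) (simple y))
  (v : mhom K (simple y) (Fo F (simple x))) :
  scal (hcomp u v) = \sum_c scal (hcomp u (j x y c)) * scal (hcomp (p x y c) v).
Proof.
have -> : hcomp u v = hcomp (hcomp u (idh _)) v by rewrite hcomph1.
rewrite -(compl x) hcomp_sumr hcomp_suml scal_sum (bigD1 y) //=.
rewrite [X in _ + X]big1 ?addr0 => [|y' ny].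
  rewrite hcomp_sumr hcomp_suml scal_sum; apply: eq_bigr => c _.
  by rewrite hcompA -hcompA scal_comp.
rewrite hcomp_sumr hcomp_suml.
rewrite (hsum_ext (g := fun _ => hzero)) ?hsum_zero ?scal_zero // => c.
by rewrite hcompA (simple_neq (hcomp u (j x y' c)) ny) hcomp0h hcomp0h.
Qed.

Lemma scal_mid_act (g : G) (x : X) (y : Y)
  (u : mhom K (actobj g (Fo F (simple x))) (simple (gsact Y g y)))
  (v : mhom K (simple (gsact Y g y)) (actobj g (Fo F (simple x)))) :
  scal (hcomp u v) = \sum_c scal (hcomp u (hcomp (acthom g (j x y c)) (iso_act K g y)))
                        * scal (hcomp (hcomp (iso_act_inv K g y) (acthom g (p x y c))) v).
Proof.
have -> : hcomp u v = hcomp (hcomp u (acthom g (idh _))) v by rewrite acthomI hcomph1.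
rewrite -(compl x) acthom_hsum hcomp_sumr hcomp_suml scal_sum.
rewrite (bigD1 y) //= [X in _ + X]big1 ?addr0 => [|y' ny].
  rewrite acthom_hsum hcomp_sumr hcomp_suml scal_sum; apply: eq_bigr => c _.
  rewrite -scal_comp; congr scal.
  by rewrite acthomC !hcompA -[hcomp (hcomp _ (iso_act K g y)) _]hcompA iso_actK hcomph1.
rewrite acthom_hsum hcomp_sumr hcomp_suml.
rewrite (hsum_ext (g := fun _ => hzero)) ?hsum_zero ?scal_zero // => c.
rewrite acthomC -[acthom g (j x y' c)]hcomph1 -(iso_actK K g y').
rewrite !hcompA (simple_neq (hcomp (hcomp u (acthom g (j x y' c))) (iso_act K g y'))).
  by rewrite !hcomp0h.
by apply: contra ny => /eqP /gact_inj ->.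
Qed.

End One.


Lemma mid4 (K : fieldType) (G : finGroupType) (T : gset G) (V1 V2 V3 V4 V5 V6 : obj T)
  (a : mhom K V5 V6) (b : mhom K V4 V5) (c : mhom K V3 V4) (d : mhom K V2 V3) (e : mhom K V1 V2) :
  hcomp (hcomp a b) (hcomp c (hcomp d e)) = hcomp a (hcomp (hcomp b (hcomp c d)) e).
Proof. by rewrite !hcompA. Qed.

Section Two.
Variables (K : fieldType) (G : finGroupType) (X Y : gset G).
Variables (PsiX : G -> G -> X -> K) (PsiY : G -> G -> Y -> K).
Variables (F1 F2 : modfun PsiX PsiY).
Unset Implicit Arguments.
Variables (j1 : inclT F1) (p1 : projT F1) (j2 : inclT F2) (p2 : projT F2).
Set Implicit Arguments.
Hypotheses (h1 : incl_proj j1 p1) (h2 : incl_proj j2 p2).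

Definition Me (e : fam F1 F2) (x : X) (y : Y) : 'M[K]_(mlt F2 x y, mlt F1 x y) :=
  \matrix_(a, b) scal (hcomp (p2 x y a) (hcomp (e x) (j1 x y b))).

Definition e0 (M : forall x y, 'M[K]_(mlt F2 x y, mlt F1 x y)) : fam F1 F2 :=
  fun x => hsum (fun y => hsum (fun a : 'I_(mlt F2 x y) => hsum (fun b : 'I_(mlt F1 x y) =>
     hscale (M x y a b) (hcomp (j2 x y a) (p1 x y b))))).

Lemma e_expand (e : fam F1 F2) x : e x = e0 (Me e) x.
Proof.
have -> : e x = hcomp (idh _) (hcomp (e x) (idh _)) by rewrite hcomp1h hcomph1.
rewrite -(compl h2 x) -(compl h1 x) hcomp_suml /e0; apply: hsum_ext => y.
rewrite hcomp_suml; apply: hsum_ext => a.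
rewrite hcomp_sumr hcomp_sumr (hsum1 (i0:=y)) => [|y' ny].
  rewrite hcomp_sumr hcomp_sumr; apply: hsum_ext => b.
  rewrite mid4 mxE {1}(simple_scal (hcomp (p2 x y a) (hcomp (e x) (j1 x y b)))).
  by rewrite hcomp_scalel hcomp1h hcomp_scaler.
rewrite hcomp_sumr hcomp_sumr ; apply: hsum0 => b.
by rewrite mid4 (simple_neq (hcomp (p2 x y a) (hcomp (e x) (j1 x y' b))) ny) hcomp0h hcomph0.
Qed.

Lemma e_expandE (e : fam F1 F2) : e = e0 (Me e).
Proof. apply: functional_extensionality_dep => x; exact: e_expand. Qed.

Lemma e0_core x y a b y' a' b' c :
  hcomp (p2 x y a) (hcomp (hscale c (hcomp (j2 x y' a') (p1 x y' b'))) (j1 x y b))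
  = hscale c (hcomp (hcomp (p2 x y a) (j2 x y' a')) (hcomp (p1 x y' b') (j1 x y b))).
Proof. by rewrite hcomp_scalel hcomp_scaler !hcompA. Qed.

Lemma Me_e0 M x y : Me (e0 M) x y = M x y.
Proof.
apply/matrixP => a b; rewrite mxE /e0 hcomp_suml hcomp_sumr (hsum1 (i0:=y)) => [|y' ny].
  rewrite hcomp_suml hcomp_sumr (hsum1 (i0:=a)) => [|a' na].
    rewrite hcomp_suml hcomp_sumr (hsum1 (i0:=b)) => [|b' nb].
      by rewrite e0_core !(orth h1, orth h2) !eqxx hcomp_scalel hcomp1h !scal_scale scal_id !mulr1.
    by rewrite e0_core !(orth h1, orth h2) (negbTE nb) hscale0 hcomph0 hscale_zero.
  rewrite hcomp_suml hcomp_sumr ; apply: hsum0 => b'.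
  by rewrite e0_core !(orth h1, orth h2) eq_sym (negbTE na) hscale0 hcomp0h hscale_zero.
rewrite hcomp_suml hcomp_sumr ; apply: hsum0 => a'.
rewrite hcomp_suml hcomp_sumr ; apply: hsum0 => b'.
by rewrite e0_core (simple_neq (hcomp (p2 x y a) (j2 x y' a')) ny) hcomp0h hscale_zero.
Qed.

End Two.


Section Comp.
Variables (K : fieldType) (G : finGroupType) (X Y : gset G).
Variables (PsiX : G -> G -> X -> K) (PsiY : G -> G -> Y -> K).
Variables (F1 F2 F3 : modfun PsiX PsiY).
Unset Implicit Arguments.
Variables (j1 : inclT F1) (j2 : inclT F2) (p2 : projT F2) (p3 : projT F3).
Set Implicit Arguments.
Hypothesis (h2 : incl_proj j2 p2).

Lemma Me_comp (th : fam F2 F3) (et : fam F1 F2) x y :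
  Me j1 p3 (fun x => hcomp (th x) (et x)) x y = Me j2 p3 th x y *m Me j1 p2 et x y.
Proof.
apply/matrixP => a b; rewrite !mxE.
have -> : hcomp (p3 x y a) (hcomp (hcomp (th x) (et x)) (j1 x y b))
  = hcomp (hcomp (p3 x y a) (th x)) (hcomp (et x) (j1 x y b)) by rewrite !hcompA.
rewrite (scal_mid h2); apply: eq_bigr => c _; rewrite !mxE; congr (_ * _); by rewrite hcompA.
Qed.
End Comp.

Section Mod.
Variables (K : fieldType) (G : finGroupType) (X Y : gset G).
Variables (PsiX : G -> G -> X -> K) (PsiY : G -> G -> Y -> K).
Variables (F1 F2 : modfun PsiX PsiY).
Unset Implicit Arguments.
Variables (j1 : inclT F1) (p1 : projT F1) (j2 : inclT F2) (p2 : projT F2).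
Set Implicit Arguments.
Hypotheses (h1 : incl_proj j1 p1) (h2 : incl_proj j2 p2).

Definition Smf (F : modfun PsiX PsiY) (g : G) (x : X) :
  mhom K (Fo F (simple (gsact X g x))) (actobj g (Fo F (simple x))) :=
  hcomp (ms F g (simple x)) (Fm F (iso_act K g x)).

Definition coef (g : G) (x : X)
  (T : mhom K (Fo F1 (simple (gsact X g x))) (actobj g (Fo F2 (simple x)))) y a b :=
  scal (hcomp (hcomp (iso_act_inv K g y) (acthom g (p2 x y a)))
              (hcomp T (j1 (gsact X g x) (gsact Y g y) b))).
Arguments coef g x T y a b : clear implicits.

Lemma coefL (e : fam F1 F2) g x y a b :
  coef g x (hcomp (Smf F2 g x) (e (gsact X g x))) y a b
  = (Amat j2 p2 g x y *m Me j1 p2 e (gsact X g x) (gsact Y g y)) a b.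
Proof.
rewrite /coef.
have -> : forall T1 T2 T3 T4 T5,
  hcomp (hcomp T1 T2) (hcomp (hcomp T3 T4) T5) = hcomp (hcomp (hcomp T1 T2) T3) (hcomp T4 T5)
  :> mhom K (simple (gsact Y g y)) (simple (gsact Y g y)).
  by move=> *; rewrite !hcompA.
rewrite (scal_mid h2) !mxE; apply: eq_bigr => c _; rewrite !mxE /Smf !hcompA //.
Qed.

Lemma coefR (e : fam F1 F2) g x y a b :
  coef g x (hcomp (acthom g (e x)) (Smf F1 g x)) y a b
  = (Me j1 p2 e x y *m Amat j1 p1 g x y) a b.
Proof.
rewrite /coef.
have -> : forall T1 T2 T3 T4 T5,
  hcomp (hcomp T1 T2) (hcomp (hcomp T3 T4) T5) = hcomp (hcomp (hcomp T1 T2) T3) (hcomp T4 T5)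
  :> mhom K (simple (gsact Y g y)) (simple (gsact Y g y)).
  by move=> *; rewrite !hcompA.
rewrite (scal_mid_act h1) !mxE; apply: eq_bigr => c _; rewrite !mxE /Smf.
congr (_ * _); last by rewrite !hcompA.
rewrite -!hcompA [hcomp (acthom g (e x)) _]hcompA -acthomC [hcomp (acthom g (p2 x y a)) _]hcompA -acthomC.
rewrite {1}(simple_scal (hcomp (p2 x y a) (hcomp (e x) (j1 x y c)))).
by rewrite acthomS hcomp_scalel hcomp_scaler acthomI hcomp1h iso_actVK scal_scale scal_id mulr1.
Qed.

Lemma expandT g x (T : mhom K (Fo F1 (simple (gsact X g x))) (actobj g (Fo F2 (simple x)))) :
  T = hsum (fun y => hsum (fun a : 'I_(mlt F2 x y) => hsum (fun y' => hsum
        (fun b : 'I_(mlt F1 (gsact X g x) y') =>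
        hcomp (hcomp (acthom g (j2 x y a)) (iso_act K g y))
         (hcomp (hcomp (hcomp (iso_act_inv K g y) (acthom g (p2 x y a)))
                       (hcomp T (j1 (gsact X g x) y' b))) (p1 (gsact X g x) y' b)))))).
Proof.
transitivity (hcomp (acthom g (idh _)) (hcomp T (idh _))); first by rewrite acthomI hcomp1h hcomph1.
rewrite -{1}(compl h2 x) -(compl h1 (gsact X g x)) acthom_hsum hcomp_suml; apply: hsum_ext => y.
rewrite acthom_hsum hcomp_suml; apply: hsum_ext => a.
rewrite !hcomp_sumr; apply: hsum_ext => y'.
rewrite !hcomp_sumr; apply: hsum_ext => b.
rewrite acthomC !hcompA -[hcomp (hcomp (acthom g (j2 x y a)) (iso_act K g y)) (iso_act_inv K g y)]hcompA iso_actK hcomph1 //.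
Qed.

Lemma coef_det g x (T1 T2 : mhom K (Fo F1 (simple (gsact X g x))) (actobj g (Fo F2 (simple x)))) :
  (forall y a b, coef g x T1 y a b = coef g x T2 y a b) -> T1 = T2.
Proof.
move=> hc; rewrite (expandT T1) (expandT T2); apply: hsum_ext => y.
apply: hsum_ext => a; apply: hsum_ext => y'; apply: hsum_ext => b.
congr (hcomp _ (hcomp _ _)).
case: (eqVneq y' (gsact Y g y)) => [e|ne].
  subst y'.
  rewrite (simple_scal (hcomp _ (hcomp T1 _))) (simple_scal (hcomp _ (hcomp T2 _))).
  by have := hc y a b; rewrite /coef => ->.
by rewrite (simple_neq (hcomp _ (hcomp T1 _)) ne) (simple_neq (hcomp _ (hcomp T2 _)) ne).
Qed.

End Mod.


Section ModNat.
Variables (K : fieldType) (G : finGroupType) (X Y : gset G).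
Variables (PsiX : G -> G -> X -> K) (PsiY : G -> G -> Y -> K).
Variables (F1 F2 : modfun PsiX PsiY).
Variable (eta : forall V : obj X, mhom K (Fo F1 V) (Fo F2 V)).
Hypothesis (hn : natural eta).

Lemma natE V W (f : mhom K V W) : hcomp (eta W) (Fm F1 f) = hcomp (Fm F2 f) (eta V).
Proof. exact/heqE/hn. Qed.

Lemma msnatE (F : modfun PsiX PsiY) g V W (f : mhom K V W) :
  hcomp (ms F g W) (Fm F (acthom g f)) = hcomp (acthom g (Fm F f)) (ms F g V).
Proof. exact/heqE/ms_nat. Qed.

Lemma simple_cond_iff g x :
  hcomp (ms F2 g (simple x)) (eta (actobj g (simple x)))
    = hcomp (acthom g (eta (simple x))) (ms F1 g (simple x)) <->
  hcomp (Smf F2 g x) (eta (simple (gsact X g x)))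
    = hcomp (acthom g (eta (simple x))) (Smf F1 g x).
Proof.
split => hc.
  by rewrite /Smf -hcompA -natE hcompA hc -hcompA.
transitivity (hcomp (hcomp (Smf F2 g x) (eta (simple (gsact X g x))))
                        (Fm F1 (iso_act_inv K g x))).
  rewrite /Smf -(hcompA (ms F2 g (simple x))) -natE !hcompA.
  rewrite -(hcompA (hcomp (ms F2 g (simple x)) (eta (actobj g (simple x))))).
  by rewrite -FmC iso_actK FmI hcomph1.
rewrite hc /Smf -!hcompA -FmC iso_actK FmI hcomph1 //.
Qed.

Lemma mod_all :
  (forall g x, hcomp (ms F2 g (simple x)) (eta (actobj g (simple x)))
    = hcomp (acthom g (eta (simple x))) (ms F1 g (simple x))) ->
  forall g V, hcomp (ms F2 g V) (eta (actobj g V)) = hcomp (acthom g (eta V)) (ms F1 g V).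
Proof.
move=> hs g V.
transitivity (hcomp (hcomp (ms F2 g V) (eta (actobj g V))) (Fm F1 (acthom g (idh V)))).
  by rewrite acthomI FmI hcomph1.
transitivity (hcomp (acthom g (eta V)) (hcomp (acthom g (Fm F1 (idh V))) (ms F1 g V))).
  2: by rewrite FmI acthomI hcomp1h.
rewrite -(decomp K V) !acthom_hsum !Fm_hsum !acthom_hsum hcomp_suml !hcomp_sumr.
apply: hsum_ext => x; rewrite !acthom_hsum !Fm_hsum !acthom_hsum hcomp_suml !hcomp_sumr.
apply: hsum_ext => k.
rewrite acthomC FmC hcompA.
rewrite -(hcompA (ms F2 g V) (eta (actobj g V))) natE.
rewrite hcompA msnatE -(hcompA (acthom g (Fm F2 (injs k)))) hs.
rewrite -!hcompA msnatE !hcompA.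
have e1 := congr1 (acthom g) (natE (injs k)); rewrite !acthomC in e1.
by rewrite -e1 FmC acthomC !hcompA.
Qed.
End ModNat.

Section Inj.
Variables (K : fieldType) (G : finGroupType) (X Y : gset G).
Variables (PsiX : G -> G -> X -> K) (PsiY : G -> G -> Y -> K).
Variables (F1 F2 : modfun PsiX PsiY).
Unset Implicit Arguments.
Variables (j1 : inclT F1) (p1 : projT F1) (j2 : inclT F2) (p2 : projT F2).
Set Implicit Arguments.
Hypotheses (h1 : incl_proj j1 p1) (h2 : incl_proj j2 p2).

Lemma nat_inj (eta1 eta2 : forall V : obj X, mhom K (Fo F1 V) (Fo F2 V)) :
  natural eta1 -> natural eta2 ->
  (forall x y, Me j1 p2 (fun x => eta1 (simple x)) x y = Me j1 p2 (fun x => eta2 (simple x)) x y) ->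
  forall V, eta1 V = eta2 V.
Proof.
move=> n1 n2 hM V; rewrite (natural_ext n1) (natural_ext n2); apply: (congr1 (fun e => ext e V)).
rewrite (e_expandE h1 h2 (fun x => eta1 (simple x))) (e_expandE h1 h2 (fun x => eta2 (simple x))).
congr e0; apply: functional_extensionality_dep => x.
apply: functional_extensionality_dep => y; exact: hM.
Qed.
End Inj.

Lemma nat_id (K : fieldType) (G : finGroupType) (X Y : gset G) (F : lin_functor K X Y) :
  natural (fun V => idh (Fo F V)).
Proof. by move=> V W f z; rewrite /hcomp /idh mul1mx mulmx1. Qed.

Lemma nat_comp (K : fieldType) (G : finGroupType) (X Y : gset G) (F1 F2 F3 : lin_functor K X Y)
  (th : forall V : obj X, mhom K (Fo F2 V) (Fo F3 V))
  (et : forall V : obj X, mhom K (Fo F1 V) (Fo F2 V)) :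
  natural th -> natural et -> natural (fun V => hcomp (th V) (et V)).
Proof.
move=> n1 n2 V W f; apply: equal_f_dep.
by rewrite -hcompA (heqE (n2 _ _ _)) hcompA (heqE (n1 _ _ _)) -hcompA.
Qed.

Lemma Me_id (K : fieldType) (G : finGroupType) (X Y : gset G)
  (PsiX : G -> G -> X -> K) (PsiY : G -> G -> Y -> K) (F : modfun PsiX PsiY)
  (j : inclT F) (p : projT F) : incl_proj j p ->
  forall x y, Me j p (fun x => idh (Fo F (simple x))) x y = 1%:M.
Proof.
move=> h x y; apply/matrixP => a b; rewrite !mxE hcomp1h (orth h) scal_scale scal_id mulr1.
by rewrite -val_eqE.
Qed.

Lemma cast_unit (K : comUnitRingType) (m n : nat) (E : n = m) (M : 'M[K]_(m, n)) (N : 'M[K]_(n, m)) :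
  M *m N = 1%:M -> castmx (erefl m, E) M \in unitmx.
Proof. by case: m / E M N => M N; rewrite castmx_id => /mulmx1_unit []. Qed.

Lemma unit_cast (K : fieldType) (m n : nat) (E : n = m) (M : 'M[K]_(m, n)) :
  castmx (erefl m, E) M \in unitmx ->
  exists N : 'M[K]_(n, m), M *m N = 1%:M /\ N *m M = 1%:M.
Proof.
case: m / E M => M; rewrite castmx_id => hu.
by exists (invmx M); rewrite mulmxV // mulVmx.
Qed.


Section Final.
Variables (K : fieldType) (G : finGroupType) (X Y : gset G).
Variables (PsiX : G -> G -> X -> K) (PsiY : G -> G -> Y -> K).
Variables (F1 F2 : modfun PsiX PsiY).
Unset Implicit Arguments.
Variables (j1 : inclT F1) (p1 : projT F1) (j2 : inclT F2) (p2 : projT F2).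
Set Implicit Arguments.
Hypotheses (h1 : incl_proj j1 p1) (h2 : incl_proj j2 p2).

Lemma part1 (eta : forall V : obj X, mhom K (Fo F1 V) (Fo F2 V)) :
  modnat eta -> forall g x y,
  Mmat j1 p2 eta x y *m Amat j1 p1 g x y
  = Amat j2 p2 g x y *m Mmat j1 p2 eta (gsact X g x) (gsact Y g y).
Proof.
case=> hn hm g x y.
have hs := (simple_cond_iff hn g x).1 (heqE (hm g (simple x))).
apply/matrixP => a b.
apply: (etrans (esym (coefR p2 h1 (fun x => eta (simple x)) a b))).
apply: (etrans _ (coefL j1 h2 (fun x => eta (simple x)) a b)).
by rewrite /= hs.
Qed.

Lemma Me_ext_e0 M x y : Me j1 p2 (fun x => ext (e0 p1 j2 M) (simple x)) x y = M x y.
Proof.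
transitivity (Me j1 p2 (e0 p1 j2 M) x y); last exact: Me_e0.
by apply/matrixP => a b; rewrite !mxE ext_simple.
Qed.

Lemma build_mod M :
  (forall g x y, M x y *m Amat j1 p1 g x y = Amat j2 p2 g x y *m M (gsact X g x) (gsact Y g y)) ->
  modnat (ext (e0 p1 j2 M)).
Proof.
move=> hM.
have hn : natural (ext (e0 p1 j2 M)) by move=> V W f z; rewrite (ext_nat _ f).
split => // g V z; rewrite (mod_all hn) // => {}g x.
apply/(simple_cond_iff hn g x); rewrite !ext_simple.
apply: (coef_det h1 h2) => y a b.
by rewrite (coefL j1 h2) (coefR p2 h1) !(Me_e0 h1 h2) hM.
Qed.
End Final.

Unset Implicit Arguments. Set Strict Implicit. Set Printing Implicit Defensive.

Theorem lemma5p8 (K : closedFieldType) (G : finGroupType)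
  (omega : G -> G -> G -> K) (X Y : gset G)
  (PsiX : G -> G -> X -> K) (PsiY : G -> G -> Y -> K) :
  normalized_3cocycle omega ->
  module_Psi omega PsiX -> module_Psi omega PsiY ->
  forall (F H : modfun PsiX PsiY)
         (jF : inclT F) (pF : projT F) (jH : inclT H) (pH : projT H),
  incl_proj jF pF -> incl_proj jH pH ->
  (* eta |-> M^eta lands in the families satisfying the compatibility *)
  (forall eta : forall V : obj X, mhom K (Fo F V) (Fo H V),
     modnat eta ->
     forall (g : G) (x : X) (y : Y),
       Mmat jF pH eta x y *m Amat jF pF g x y
       = Amat jH pH g x y *m Mmat jF pH eta (gsact X g x) (gsact Y g y)) /\
  (* injectivity *)
  (forall eta1 eta2 : forall V : obj X, mhom K (Fo F V) (Fo H V),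
     modnat eta1 -> modnat eta2 ->
     (forall x y, Mmat jF pH eta1 x y = Mmat jF pH eta2 x y) ->
     forall V, heq (eta1 V) (eta2 V)) /\
  (* surjectivity *)
  (forall M : forall (x : X) (y : Y), 'M[K]_(mlt H x y, mlt F x y),
     (forall (g : G) (x : X) (y : Y),
        M x y *m Amat jF pF g x y = Amat jH pH g x y *m M (gsact X g x) (gsact Y g y)) ->
     exists eta : forall V : obj X, mhom K (Fo F V) (Fo H V),
       modnat eta /\ forall x y, Mmat jF pH eta x y = M x y) /\
  (* isomorphisms *)
  (forall eta : forall V : obj X, mhom K (Fo F V) (Fo H V),
     modnat eta ->
     (modiso eta <->
      forall x y, exists E : mlt F x y = mlt H x y,
        castmx (erefl (mlt H x y), E) (Mmat jF pH eta x y) \in unitmx)).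
Proof.
move=> _ _ _ F H jF pF jH pH hF hH.
split; first exact: part1.
split.
  move=> e1 e2 hn1 hn2 hM V z.
  by rewrite (nat_inj hF hH (proj1 hn1) (proj1 hn2) hM V).
split.
  move=> M hM; exists (ext (e0 pF jH M)); split; first exact: (build_mod hF hH hM).
  by move=> x y; apply: Me_ext_e0.
move=> eta hn; split.
  case=> th [hth hinv] x y.
  have MN : Mmat jF pH eta x y *m Me jH pF (fun x => th (simple x)) x y = 1%:M.
    change (Me jF pH (fun x => eta (simple x)) x y *m Me jH pF (fun x => th (simple x)) x y = 1%:M).
    rewrite -(Me_comp jH pH hF).
    have -> : (fun x => hcomp (eta (simple x)) (th (simple x))) = (fun x => idh _).
      by apply: functional_extensionality_dep => x'; apply: heqE; case: (hinv (simple x')).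
    exact: Me_id.
  have NM : Me jH pF (fun x => th (simple x)) x y *m Mmat jF pH eta x y = 1%:M.
    change (Me jH pF (fun x => th (simple x)) x y *m Me jF pH (fun x => eta (simple x)) x y = 1%:M).
    rewrite -(Me_comp jF pF hH).
    have -> : (fun x => hcomp (th (simple x)) (eta (simple x))) = (fun x => idh _).
      by apply: functional_extensionality_dep => x'; apply: heqE; case: (hinv (simple x')).
    exact: Me_id.
  have E : mlt F x y = mlt H x y.
    by apply/eqP; rewrite eqn_leq (mulmx1_min MN) (mulmx1_min NM).
  by exists E; apply: cast_unit MN.
move=> hU.
have hN : forall x y, exists N : 'M[K]_(mlt F x y, mlt H x y),
    Mmat jF pH eta x y *m N = 1%:M /\ N *m Mmat jF pH eta x y = 1%:M.
  by move=> x y; case: (hU x y) => E; apply: unit_cast.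
have [N hN'] : exists N : forall x y, 'M[K]_(mlt F x y, mlt H x y),
    forall x y, Mmat jF pH eta x y *m N x y = 1%:M /\ N x y *m Mmat jF pH eta x y = 1%:M.
  apply: (@fin_all_exists X (fun x => forall y, 'M[K]_(mlt F x y, mlt H x y))
    (fun x N => forall y, Mmat jF pH eta x y *m N y = 1%:M /\ N y *m Mmat jF pH eta x y = 1%:M)) => x.
  exact: (@fin_all_exists Y (fun y => 'M[K]_(mlt F x y, mlt H x y))
    (fun y N => Mmat jF pH eta x y *m N = 1%:M /\ N *m Mmat jF pH eta x y = 1%:M) (hN x)).
have MA := part1 hF hH hn.
have NA : forall g x y,
    N x y *m Amat jH pH g x y = Amat jF pF g x y *m N (gsact X g x) (gsact Y g y).
  move=> g x y.
  rewrite -[LHS]mulmx1 -(proj1 (hN' (gsact X g x) (gsact Y g y))) !mulmxA.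
  rewrite -[N x y *m _ *m _]mulmxA -MA mulmxA (proj2 (hN' x y)) mul1mx //.
set th := ext (e0 pH jF N).
have hth : modnat th by exact: (build_mod hH hF NA).
have Nth : forall x y, Me jH pF (fun x => th (simple x)) x y = N x y.
  by move=> x y; apply: Me_ext_e0.
exists th; split => // V; split => z.
  rewrite (@nat_inj _ _ _ _ _ _ F F jF pF jF pF hF hF
     (fun V => hcomp (th V) (eta V)) (fun V => idh _)) //.
  - exact: nat_comp (proj1 hth) (proj1 hn).
  - exact: nat_id.
  move=> x y; rewrite (Me_comp jF pF hH) Nth (proj2 (hN' x y)) (Me_id hF) //.
rewrite (@nat_inj _ _ _ _ _ _ H H jH pH jH pH hH hH
   (fun V => hcomp (eta V) (th V)) (fun V => idh _)) //.
- exact: nat_comp (proj1 hn) (proj1 hth).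
- exact: nat_id.
move=> x y; rewrite (Me_comp jH pH hF) Nth (proj1 (hN' x y)) (Me_id hH) //.
Qed.
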